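(* Let $X$ be a Banach space whose norm is Fréchet differentiable and let $1<p<\infty$, $p\neq 2$. If $x=(x_k)\in\ell^p(X)$ is a left symmetric point (respectively, right symmetric point) of $\ell^p(X)$, then either there is an index $n$ with $x_k=0$ for all $k\neq n$ and $x_n$ a left symmetric point (respectively, right symmetric point) of $X$, or there are indices $n\neq m$ with $x_k=0$ for all $k\notin\{n,m\}$ and $\|x_n\|=\|x_m\|$.
   Context: $\ell^p(X)$ is the space of sequences $(x_k)_{k\in\mathbb{N}}$ in $X$ with $\|(x_k)\|_p=(\sum_k\|x_k\|^p)^{1/p}<\infty$. In a normed space $Y$ over $\mathbb{K}$, $x\perp_{BJ}y$ means $\|x+\lambda y\|\ge\|x\|$ for all $\lambda\in\mathbb{K}$; $x$ is a left symmetric point if $x\perp_{BJ}y$ implies $y\perp_{BJ}x$ for all $y$, and a right symmetric point if $y\perp_{BJ}x$ implies $x\perp_{BJ}y$ for all $y$. The norm of $X$ is Fréchet differentiable if for every non-zero $x$ there is $\varphi\in X^*$ with $\lim_{h\to0}\big|\|x+h\|-\|x\|-\varphi(h)\big|/\|h\|=0$. *)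

(* Defs.v *)
From HB Require Import structures.
From mathcomp Require Import all_boot all_order all_algebra.
From mathcomp Require Import all_classical all_reals all_analysis.
Set Implicit Arguments. Unset Strict Implicit. Unset Printing Implicit Defensive.
Import Order.TTheory GRing.Theory Num.Theory.
Import numFieldNormedType.Exports.
Local Open Scope classical_set_scope.
Local Open Scope ring_scope.

(* An isometric complex structure on a real normed space: multiplication by i,
   such that ||(a + i b) x|| = |a + i b| ||x||.  A complex normed space is
   exactly a real normed space equipped with such a J. *)
Record cstruct (R : realType) (X : normedModType R) := CStruct {
  cJ : {linear X -> X};
  cJJ : forall x, cJ (cJ x) = - x;
  cJnorm : forall (a b : R) (x : X),
      `|a *: x + b *: cJ x| = Num.sqrt (a ^+ 2 + b ^+ 2) * `|x| }.

(* The scalar field K: either the reals, or the complex numbers via a complex structure. *)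
Inductive fkind (R : realType) (X : normedModType R) :=
| RealF : fkind X
| ComplexF : cstruct X -> fkind X.

(* Action of the scalar lambda = a + i b (b must be 0 when K = R). *)
Definition sc (R : realType) (X : normedModType R) (k : fkind X) (a b : R) (x : X) : X :=
  match k with
  | RealF => a *: x
  | ComplexF c => a *: x + b *: cJ c x
  end.

Definition admissible (R : realType) (X : normedModType R) (k : fkind X) (b : R) : Prop :=
  match k with RealF => b = 0 | ComplexF _ => True end.

Definition bj (R : realType) (X : normedModType R) (k : fkind X) (x y : X) : Prop :=
  forall a b : R, admissible k b -> `|x| <= `|x + sc k a b y|.

Definition left_sym (R : realType) (X : normedModType R) (k : fkind X) (x : X) : Prop :=
  forall y : X, bj k x y -> bj k y x.

Definition right_sym (R : realType) (X : normedModType R) (k : fkind X) (x : X) : Prop :=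
  forall y : X, bj k y x -> bj k x y.

Definition lp_mem (R : realType) (X : normedModType R) (p : R) (u : nat -> X) : Prop :=
  cvgn (series (fun n => `|u n| `^ p)).

Definition lp_norm (R : realType) (X : normedModType R) (p : R) (u : nat -> X) : R :=
  (limn (series (fun n => `|u n| `^ p))) `^ p^-1.

Definition bj_lp (R : realType) (X : normedModType R) (k : fkind X) (p : R)
    (x y : nat -> X) : Prop :=
  forall a b : R, admissible k b ->
    lp_norm p x <= lp_norm p (fun n => x n + sc k a b (y n)).

Definition left_sym_lp (R : realType) (X : normedModType R) (k : fkind X) (p : R)
    (x : nat -> X) : Prop :=
  forall y : nat -> X, lp_mem p y -> bj_lp k p x y -> bj_lp k p y x.

Definition right_sym_lp (R : realType) (X : normedModType R) (k : fkind X) (p : R)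
    (x : nat -> X) : Prop :=
  forall y : nat -> X, lp_mem p y -> bj_lp k p y x -> bj_lp k p x y.

Definition norm_frechet (R : realType) (X : normedModType R) : Prop :=
  forall x : X, x != 0 -> differentiable (fun y : X => `|y|) x.

(* Main.v *)
Require Import Defs.
From HB Require Import structures.
From mathcomp Require Import all_boot all_order all_algebra.
From mathcomp Require Import all_classical all_reals all_analysis.
From mathcomp Require Import ring lra.
Import Order.TTheory GRing.Theory Num.Theory.
Import numFieldNormedType.Exports.
Local Open Scope ring_scope.

Module Helpers.
Set Implicit Arguments. Unset Strict Implicit. Unset Printing Implicit Defensive.
Local Open Scope classical_set_scope.
Local Open Scope ring_scope.
Section Scal.
Variable R : realType.
Variable p : R.
Hypothesis p1 : 1 < p.

Let p0 : 0 < p. Proof. by apply: lt_trans p1. Qed.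

Definition pw (t : R) := `|t| `^ p.
Definition sgp (t : R) := Num.sg t * `|t| `^ (p - 1).

Lemma bern (t : R) : 1 + p * t <= `|1 + t| `^ p.
Proof.
have [h|h] := leP (1 + t) 0.
  apply: le_trans (powR_ge0 _ _).
  have : t * (p - 1) <= 0.
    apply: mulr_le0_ge0; [lra| rewrite subr_ge0 ltW //].
  have -> : 1 + p * t = (1 + t) + t * (p - 1) by ring.
  lra.
set s := 1 + t.
have s0 : 0 <= s by apply: ltW.
rewrite ger0_norm //.
pose q := p / (p - 1).
have pm1 : 0 < p - 1 by rewrite subr_gt0.
have q0 : 0 < q by rewrite divr_gt0.
have pq : p^-1 + q^-1 = 1.
  rewrite /q invf_div; field; rewrite gt_eqF //.
have := conjugate_powR s0 ler01 p0 q0 pq.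
rewrite powR1 mulr1.
have -> : 1 / q = (p - 1) / p by rewrite div1r /q invf_div.
move=> H.
have : p * s <= p * (s `^ p / p + (p - 1) / p) by rewrite ler_pM2l.
have -> : p * (s `^ p / p + (p - 1) / p) = s `^ p + (p - 1).
  field; rewrite gt_eqF //.
rewrite /s => h2. nra.
Qed.


Lemma pw0 : pw 0 = 0.
Proof. by rewrite /pw normr0 powR0 // gt_eqF. Qed.

Lemma sgp0 : sgp 0 = 0.
Proof. by rewrite /sgp sgr0 mul0r. Qed.

Lemma sgp1 : sgp 1 = 1.
Proof. by rewrite /sgp sgr1 normr1 powR1 mul1r. Qed.

Lemma sgp_pos t : 0 < t -> sgp t = t `^ (p - 1).
Proof. by move=> t0; rewrite /sgp gtr0_sg // gtr0_norm // mul1r. Qed.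

Lemma sgp_neg t : t < 0 -> sgp t = - ((- t) `^ (p - 1)).
Proof. by move=> t0; rewrite /sgp ltr0_sg // ltr0_norm // mulN1r. Qed.

Lemma pw_ge0 t : 0 <= pw t. Proof. exact: powR_ge0. Qed.

Lemma norm_div_sg (v : R) : v != 0 -> `|v| / v = Num.sg v.
Proof.
move=> v0; have [h|h] := ltP 0 v.
  by rewrite gtr0_norm // gtr0_sg // divff.
have h' : v < 0 by rewrite lt_neqAle v0 h.
by rewrite ltr0_norm // ltr0_sg // mulNr divff.
Qed.

Lemma tangent (u v : R) : pw v + p * sgp v * (u - v) <= pw u.
Proof.
have [->|v0] := eqVneq v 0.
  by rewrite pw0 sgp0 mulr0 mul0r addr0 pw_ge0.
have := bern (u / v - 1).
have -> : 1 + (u / v - 1) = u / v by ring.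
move=> hb.
have hv : 0 < `|v| `^ p by rewrite powR_gt0 // normr_gt0.
have := hb; rewrite -(ler_pM2l hv) => hb2.
have e1 : `|v| `^ p * `|u / v| `^ p = pw u.
  rewrite /pw -powRM ?normr_ge0 //; congr (_ `^ _).
  by rewrite -normrM mulrC divfK.
have e2 : `|v| `^ p * (1 + p * (u / v - 1)) = pw v + p * sgp v * (u - v).
  rewrite /pw /sgp -(mulr_powRB1 (normr_ge0 v) p0).
  rewrite -(norm_div_sg v0).
  field. by [].
by rewrite -e1 -e2.
Qed.


Lemma powR_cont (r t : R) : 0 < t -> x `^ r @[x --> t] --> t `^ r.
Proof.
move=> t0.
have : derivable (fun x : R => x `^ r) t 1 by apply: derivable_powR; rewrite in_itv /= t0.
by move/derivable1_diffP/differentiable_continuous.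
Qed.

Lemma sgp_cont (t : R) : sgp x @[x --> t] --> sgp t.
Proof.
have [t0|t0|->] := ltgtP t 0.
- rewrite sgp_neg //.
  apply: (@cvg_trans _ ((fun x => - ((- x) `^ (p - 1))) @ t)).
    apply: near_eq_cvg; near=> x; rewrite sgp_neg //.
    near: x; exact: lt_nbhsl.
  have h : y `^ (p - 1) @[y --> - t] --> (- t) `^ (p - 1).
    by apply: powR_cont; rewrite oppr_gt0.
  have hn : (fun x : R => - x) x @[x --> t] --> - t by apply: cvgN; exact: cvg_id.
  have hc := cvg_comp _ _ hn h.
  exact: (cvgN hc).
- rewrite sgp_pos //.
  apply: (@cvg_trans _ ((fun x => x `^ (p - 1)) @ t)).
    apply: near_eq_cvg; near=> x; rewrite sgp_pos //.
    near: x; exact: lt_nbhsr.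
  exact: powR_cont.
- rewrite sgp0; apply/cvgrPdist_lt => e e0.
  have pm1 : 0 < p - 1 by rewrite subr_gt0.
  near=> x.
  rewrite sub0r normrN /sgp normrM.
  have hs : Num.norm (Num.sg x) <= 1 by rewrite normr_sg; case: (x == 0).
  have H1 : Num.norm (Num.sg x) * Num.norm (Num.norm x `^ (p - 1)) <= Num.norm (Num.norm x `^ (p - 1)).
    by rewrite ler_piMl.
  apply: le_lt_trans H1 _.
  rewrite ger0_norm ?powR_ge0 //.
  have -> : e = (e `^ (p - 1)^-1) `^ (p - 1).
    by rewrite -powRrM mulVf ?gt_eqF // powRr1 // ltW.
  apply: gt0_ltr_powR => //; rewrite ?nnegrE ?powR_ge0 //.
  near: x; apply: cvgr0_norm_lt; [exact: cvg_id | exact: powR_gt0].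
Unshelve. all: by end_near.
Qed.


Lemma cvg_sum_ord (t : R) (N : nat)
    (f : nat -> R -> R) (l : nat -> R) :
  (forall k, f k x @[x --> t] --> l k) ->
  \sum_(k < N) f k x @[x --> t] --> \sum_(k < N) l k.
Proof.
move=> hf; elim: N => [|N IH].
  rewrite big_ord0; under eq_cvg do rewrite big_ord0; exact: cvg_cst.
rewrite big_ord_recr /=; under eq_cvg do rewrite big_ord_recr /=.
exact: cvgD.
Qed.

Lemma fermat (N : nat) (c0 : R) (c be ga : nat -> R) :
  0 <= c0 -> (forall k, 0 <= c k) ->
  (forall a, \sum_(k < N) c k * pw (be k) <=
             c0 * pw a + \sum_(k < N) c k * pw (be k + ga k * a)) ->
  \sum_(k < N) c k * ga k * sgp (be k) = 0.
Proof.
move=> c00 c_ge0 H.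
pose G a := c0 * sgp a + \sum_(k < N) c k * ga k * sgp (be k + ga k * a).
have hG0 : G 0 = \sum_(k < N) c k * ga k * sgp (be k).
  rewrite /G sgp0 mulr0 add0r; apply: eq_bigr => k _; by rewrite mulr0 addr0.
have ub : forall a, c0 * pw a + \sum_(k < N) c k * pw (be k + ga k * a) <=
    \sum_(k < N) c k * pw (be k) + p * (a * G a).
  move=> a.
  have h0 : c0 * pw a <= p * (a * (c0 * sgp a)).
    have := tangent 0 a; rewrite pw0 => t.
    have : pw a <= p * sgp a * a by lra.
    move=> t2; have := ler_wpM2l c00 t2.
    by have -> : p * (a * (c0 * sgp a)) = c0 * (p * sgp a * a) by ring.
  have h1 : \sum_(k < N) c k * pw (be k + ga k * a) <=
      \sum_(k < N) (c k * pw (be k) + p * (a * (c k * ga k * sgp (be k + ga k * a)))).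
    apply: ler_sum => k _.
    have := tangent (be k) (be k + ga k * a) => t.
    have t2 : pw (be k + ga k * a) <= pw (be k) + p * sgp (be k + ga k * a) * (ga k * a).
      have e : be k - (be k + ga k * a) = - (ga k * a) by ring.
      by move: t; rewrite e mulrN; lra.
    have := ler_wpM2l (c_ge0 k) t2.
    set s := sgp _; move=> t3.
    by apply: le_trans t3 _; rewrite le_eqVlt; apply/orP; left; apply/eqP; ring.
  rewrite big_split /= in h1.
  have e : p * (a * G a) = p * (a * (c0 * sgp a)) +
      \sum_(k < N) p * (a * (c k * ga k * sgp (be k + ga k * a))).
    by rewrite /G -!mulr_sumr; ring.
  rewrite e; lra.
have pos : forall a, 0 <= a * G a.
  move=> a; have := le_trans (H a) (ub a).
  rewrite -subr_ge0 addrC addKr => h.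
  by rewrite -(pmulr_rge0 _ p0).
have cont : G x @[x --> 0] --> G 0.
  have ca : c0 * sgp x @[x --> (0:R)] --> c0 * sgp 0.
    exact: (@cvgMl_tmp _ _ _ _ sgp c0 (sgp 0) (@sgp_cont 0)).
  have cb : \sum_(k < N) c k * ga k * sgp (be k + ga k * x) @[x --> (0:R)] -->
            \sum_(k < N) c k * ga k * sgp (be k + ga k * 0).
    apply: (@cvg_sum_ord 0 N (fun k x => c k * ga k * sgp (be k + ga k * x)) (fun k => c k * ga k * sgp (be k + ga k * 0))) => k.
    apply: (@cvgMl_tmp _ _ _ _ (fun x => sgp (be k + ga k * x)) (c k * ga k)).
    have h1 : be k + ga k * x @[x --> (0:R)] --> be k + ga k * 0.
      apply: cvgD; first exact: cvg_cst.
      exact: (@cvgMl_tmp _ _ _ _ id (ga k) 0 cvg_id).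
    exact: (cvg_comp _ _ h1 (@sgp_cont (be k + ga k * 0))).
  exact: (cvgD ca cb).
rewrite -hG0.
have [g0|g0|//] := ltgtP (G 0) 0.
- have hr := cvg_at_right_filter cont.
  have h2 := @cvgr_lt _ _ _ _ G (G 0) hr 0 g0.
  have [x [x0 gx]] : exists x, 0 < x /\ G x < 0.
    apply: (@filter_ex R (0:R)^'+ _); near=> x; split.
      by near: x; exact: nbhs_right_gt.
    near: x; exact: h2.
  by have := pos x; rewrite leNgt pmulr_rlt0 // gx.
- have hr := cvg_at_left_filter cont.
  have h2 := @cvgr_gt _ _ _ _ G (G 0) hr 0 g0.
  have [x [x0 gx]] : exists x, x < 0 /\ 0 < G x.
    apply: (@filter_ex R (0:R)^'- _); near=> x; split.
      by near: x; exact: nbhs_left_lt.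
    near: x; exact: h2.
  by have := pos x; rewrite leNgt nmulr_rlt0 // gx.
Unshelve. all: by end_near.
Qed.


End Scal.


Lemma sc_norm (R : realType) (X : normedModType R) (k : fkind X) (a b c d : R) (v : X) :
  admissible k b ->
  `|c *: v + sc k a b (d *: v)| = Num.sqrt ((c + a * d) ^+ 2 + (b * d) ^+ 2) * `|v|.
Proof.
case: k => [|cs] /= hb.
  by rewrite hb mul0r expr0n /= addr0 sqrtr_sqr scalerA -scalerDl normrZ.
have -> : cJ cs (d *: v) = d *: cJ cs v by rewrite linearZ.
rewrite !scalerA addrA -scalerDl cJnorm.
by [].
Qed.

Section Ser.
Variable R : realType.

Lemma series_mod (u w : nat -> R) (r : R) (N : nat) :
  cvgn (series u) -> (forall k, (N <= k)%N -> w k = 0) ->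
  series (fun k => r * u k + w k) @ \oo --> r * limn (series u) + \sum_(k < N) w k.
Proof.
move=> cu w0.
have e : forall n, (N <= n)%N ->
    series (fun k => r * u k + w k) n = r * series u n + \sum_(k < N) w k.
  move=> n hn; rewrite /series /= big_split /= -mulr_sumr; congr (_ + _).
  rewrite (@big_cat_nat _ _ _ N 0 n) //= big_mkord.
  rewrite [X in _ + X](_ : _ = 0) ?addr0 //.
  rewrite big_nat_cond big1 // => i /andP[/andP[hi _] _]; exact: w0.
have h1 : r * series u x @[x --> \oo] --> r * limn (series u).
  by apply: cvgMl_tmp.
have h2 : r * series u x + \sum_(k < N) w k @[x --> \oo] -->
    r * limn (series u) + \sum_(k < N) w k.
  by apply: cvgD => //; exact: cvg_cst.
apply: (cvg_trans _ h2).
apply: near_eq_cvg; near=> n; rewrite /= e //.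
near: n; exists N => //.
Unshelve. all: by end_near.
Qed.

Lemma series_mod_lim (u w : nat -> R) (r : R) (N : nat) :
  cvgn (series u) -> (forall k, (N <= k)%N -> w k = 0) ->
  limn (series (fun k => r * u k + w k)) = r * limn (series u) + \sum_(k < N) w k.
Proof. by move=> cu w0; apply: cvg_lim => //; exact: series_mod. Qed.

Lemma series_mod_cvg (u w : nat -> R) (r : R) (N : nat) :
  cvgn (series u) -> (forall k, (N <= k)%N -> w k = 0) ->
  cvgn (series (fun k => r * u k + w k)).
Proof. by move=> cu w0; exact: (cvgP _ (series_mod (r:=r) cu w0)). Qed.

Lemma psum_le_lim (u : nat -> R) (N : nat) :
  (forall k, 0 <= u k) -> cvgn (series u) -> \sum_(k < N) u k <= limn (series u).
Proof.
move=> u0 cu.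
have := @nondecreasing_cvgn_le _ (series u) _ cu N.
rewrite /series /= big_mkord; apply.
exact: (@nondecreasing_series _ u predT 0).
Qed.

End Ser.


Section LP.
Variable R : realType.
Variable X : normedModType R.
Variable k : fkind X.
Variable p : R.
Hypothesis p1 : 1 < p.
Let p0 : 0 < p. Proof. by apply: lt_trans p1. Qed.

Lemma lim_ge0 (u : nat -> R) : (forall j, 0 <= u j) -> cvgn (series u) -> 0 <= limn (series u).
Proof. by move=> u0 cu; have := psum_le_lim 0 u0 cu; rewrite big_ord0. Qed.

Lemma powinv_le (s t : R) : 0 <= s -> 0 <= t -> (s `^ p^-1 <= t `^ p^-1) = (s <= t).
Proof.
move=> s0 t0; apply/idP/idP => h.
  have := ge0_ler_powR (ltW p0) (powR_ge0 s p^-1) (powR_ge0 t p^-1) h.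
  by rewrite -!powRrM mulVf ?gt_eqF // !powRr1.
by apply: ge0_ler_powR => //; rewrite invr_ge0 ltW.
Qed.

Lemma norm_z a b (al : R) (v : X) : admissible k b ->
  `|v + sc k a b (al *: v)| `^ p =
  Num.sqrt ((1 + a * al) ^+ 2 + (b * al) ^+ 2) `^ p * `|v| `^ p.
Proof. by move=> hb; rewrite -{1}(scale1r v) sc_norm // powRM // sqrtr_ge0. Qed.

Lemma norm_w a b (al : R) (v : X) : admissible k b ->
  `|al *: v + sc k a b v| `^ p =
  Num.sqrt ((al + a * 1) ^+ 2 + (b * 1) ^+ 2) `^ p * `|v| `^ p.
Proof. by move=> hb; rewrite -{2}(scale1r v) sc_norm // powRM // sqrtr_ge0. Qed.

Lemma norm_y (al : R) (v : X) : `|al *: v| `^ p = `|al| `^ p * `|v| `^ p.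
Proof. by rewrite normrZ powRM. Qed.

Variable x : nat -> X.
Hypothesis hx : lp_mem p x.
Let A j := `|x j| `^ p.
Let L := limn (series A).
Let A0 j : 0 <= A j. Proof. exact: powR_ge0. Qed.
Let hA : cvgn (series A). Proof. exact: hx. Qed.

Variable N : nat.
Variable al : nat -> R.
Hypothesis alN : forall j, (N <= j)%N -> al j = 0.
Let y j := al j *: x j.

Lemma y_mem : lp_mem p y.
Proof.
rewrite /lp_mem (_ : (fun n => `|y n| `^ p) = (fun j => 0 * A j + `|al j| `^ p * A j)).
  apply: series_mod_cvg => // j hj; rewrite alN; [rewrite normr0 powR0 ?mul0r // gt_eqF //| exact: hj].
by apply: funext => j; rewrite mul0r add0r norm_y.
Qed.

Lemma y_lim : limn (series (fun n => `|y n| `^ p)) = \sum_(j < N) `|al j| `^ p * A j.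
Proof.
rewrite (_ : (fun n => `|y n| `^ p) = (fun j => 0 * A j + `|al j| `^ p * A j)).
  rewrite (@series_mod_lim _ _ _ _ N); [by rewrite mul0r add0r | exact: hA |].
  move=> j hj; rewrite alN; [by rewrite normr0 powR0 ?mul0r // gt_eqF| exact: hj].
by apply: funext => j; rewrite mul0r add0r norm_y.
Qed.

Lemma z_lim a b : admissible k b ->
  limn (series (fun n => `|x n + sc k a b (y n)| `^ p)) =
  L + \sum_(j < N) (Num.sqrt ((1 + a * al j) ^+ 2 + (b * al j) ^+ 2) `^ p - 1) * A j.
Proof.
move=> hb.
rewrite (_ : (fun n => `|x n + sc k a b (y n)| `^ p) = (fun j => 1 * A j +
   (Num.sqrt ((1 + a * al j) ^+ 2 + (b * al j) ^+ 2) `^ p - 1) * A j)).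
  rewrite (@series_mod_lim _ _ _ _ N); [by rewrite mul1r | exact: hA |].
  move=> j hj; rewrite alN; last exact: hj.
  by rewrite !mulr0 addr0 expr1n expr0n /= addr0 sqrtr1 powR1 subrr mul0r.
by apply: funext => j; rewrite norm_z // /A; ring.
Qed.

Lemma w_lim a b : admissible k b ->
  limn (series (fun n => `|y n + sc k a b (x n)| `^ p)) =
  Num.sqrt ((0 + a * 1) ^+ 2 + (b * 1) ^+ 2) `^ p * L +
  \sum_(j < N) (Num.sqrt ((al j + a * 1) ^+ 2 + (b * 1) ^+ 2) `^ p -
                Num.sqrt ((0 + a * 1) ^+ 2 + (b * 1) ^+ 2) `^ p) * A j.
Proof.
move=> hb.
rewrite (_ : (fun n => `|y n + sc k a b (x n)| `^ p) = (fun j =>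
   Num.sqrt ((0 + a * 1) ^+ 2 + (b * 1) ^+ 2) `^ p * A j +
   (Num.sqrt ((al j + a * 1) ^+ 2 + (b * 1) ^+ 2) `^ p -
                Num.sqrt ((0 + a * 1) ^+ 2 + (b * 1) ^+ 2) `^ p) * A j)).
  rewrite (@series_mod_lim _ _ _ _ N); [by [] | exact: hA |].
  move=> j hj; rewrite alN; last exact: hj.
  by rewrite subrr mul0r.
by apply: funext => j; rewrite norm_w // /A; ring.
Qed.


Lemma sqrt_ge_abs (s t : R) : `|s| <= Num.sqrt (s ^+ 2 + t ^+ 2).
Proof. by rewrite -sqrtr_sqr ler_sqrt ?addr_ge0 ?sqr_ge0 // lerDl sqr_ge0. Qed.

Lemma powp_le (s t : R) : 0 <= s -> s <= t -> s `^ p <= t `^ p.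
Proof.
move=> s0 st; apply: ge0_ler_powR => //; first exact: ltW.
by rewrite nnegrE (le_trans s0).
Qed.

Lemma L_ge0 : 0 <= L.
Proof. exact: lim_ge0. Qed.

Lemma L_ge_sum : \sum_(j < N) A j <= L.
Proof. exact: psum_le_lim. Qed.

Lemma O1 : \sum_(j < N) A j * al j = 0 -> bj_lp k p x y.
Proof.
move=> hs a b hb; rewrite /lp_norm z_lim //.
have key : forall j : 'I_N, p * a * (A j * al j) <=
    (Num.sqrt ((1 + a * al j) ^+ 2 + (b * al j) ^+ 2) `^ p - 1) * A j.
  move=> j.
  have h1 := bern p1 (a * al j).
  have h2 : `|1 + a * al j| `^ p <= Num.sqrt ((1 + a * al j) ^+ 2 + (b * al j) ^+ 2) `^ p.
    by apply: powp_le => //; exact: sqrt_ge_abs.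
  have h3 : p * (a * al j) <= Num.sqrt ((1 + a * al j) ^+ 2 + (b * al j) ^+ 2) `^ p - 1.
    lra.
  have := ler_wpM2r (A0 j) h3.
  by have -> : p * a * (A j * al j) = p * (a * al j) * A j by ring.
have hS : \sum_(j < N) p * a * (A j * al j) <= \sum_(j < N)
    (Num.sqrt ((1 + a * al j) ^+ 2 + (b * al j) ^+ 2) `^ p - 1) * A j.
  by apply: ler_sum => j _; exact: key.
rewrite -mulr_sumr hs mulr0 in hS.
rewrite powinv_le; first by rewrite lerDl.
  exact: L_ge0.
by rewrite addr_ge0 // L_ge0.
Qed.

Lemma O2 : \sum_(j < N) A j * sgp p (al j) = 0 -> bj_lp k p y x.
Proof.
move=> hs a b hb; rewrite /lp_norm w_lim // y_lim.
set r0 := Num.sqrt ((0 + a * 1) ^+ 2 + (b * 1) ^+ 2) `^ p.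
have r00 : 0 <= r0 by exact: powR_ge0.
have e : r0 * L + \sum_(j < N) (Num.sqrt ((al j + a * 1) ^+ 2 + (b * 1) ^+ 2) `^ p - r0) * A j
   = r0 * (L - \sum_(j < N) A j) +
     \sum_(j < N) Num.sqrt ((al j + a * 1) ^+ 2 + (b * 1) ^+ 2) `^ p * A j.
  rewrite mulrBr -addrA; congr (_ + _).
  rewrite mulr_sumr -sumrN -big_split /=; apply: eq_bigr => j _; ring.
rewrite e.
have key : forall j : 'I_N, `|al j| `^ p * A j + p * a * (A j * sgp p (al j)) <=
    Num.sqrt ((al j + a * 1) ^+ 2 + (b * 1) ^+ 2) `^ p * A j.
  move=> j.
  have h1 := tangent p1 (al j + a) (al j).
  have h2 : `|al j + a| `^ p <= Num.sqrt ((al j + a * 1) ^+ 2 + (b * 1) ^+ 2) `^ p.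
    by apply: powp_le => //; rewrite mulr1; exact: sqrt_ge_abs.
  have h3 : `|al j| `^ p + p * a * sgp p (al j) <=
      Num.sqrt ((al j + a * 1) ^+ 2 + (b * 1) ^+ 2) `^ p.
    move: h1; rewrite /pw.
    have -> : al j + a - al j = a by ring.
    move=> h1; apply: le_trans h2; apply: le_trans h1.
    by rewrite le_eqVlt; apply/orP; left; apply/eqP; ring.
  have := ler_wpM2r (A0 j) h3.
  by have -> : (`|al j| `^ p + p * a * sgp p (al j)) * A j =
     `|al j| `^ p * A j + p * a * (A j * sgp p (al j)) by ring.
have hS : \sum_(j < N) (`|al j| `^ p * A j + p * a * (A j * sgp p (al j))) <=
    \sum_(j < N) Num.sqrt ((al j + a * 1) ^+ 2 + (b * 1) ^+ 2) `^ p * A j.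
  by apply: ler_sum => j _; exact: key.
rewrite big_split /= -mulr_sumr hs mulr0 addr0 in hS.
have hL : 0 <= r0 * (L - \sum_(j < N) A j) by rewrite mulr_ge0 // subr_ge0 L_ge_sum.
rewrite powinv_le.
- by apply: le_trans hS _; rewrite lerDr.
- by apply: sumr_ge0 => j _; rewrite mulr_ge0 // powR_ge0.
- apply: addr_ge0 => //; apply: sumr_ge0 => j _; rewrite mulr_ge0 // powR_ge0.
Qed.

Lemma w_lim2 a b : admissible k b ->
  limn (series (fun n => `|y n + sc k a b (x n)| `^ p)) =
  Num.sqrt ((0 + a * 1) ^+ 2 + (b * 1) ^+ 2) `^ p * (L - \sum_(j < N) A j) +
  \sum_(j < N) Num.sqrt ((al j + a * 1) ^+ 2 + (b * 1) ^+ 2) `^ p * A j.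
Proof.
move=> hb; rewrite w_lim //.
rewrite mulrBr -addrA; congr (_ + _).
rewrite mulr_sumr -sumrN -big_split /=; apply: eq_bigr => j _; ring.
Qed.

Lemma z_lim2 a b : admissible k b ->
  limn (series (fun n => `|x n + sc k a b (y n)| `^ p)) =
  (L - \sum_(j < N) A j) +
  \sum_(j < N) Num.sqrt ((1 + a * al j) ^+ 2 + (b * al j) ^+ 2) `^ p * A j.
Proof.
move=> hb; rewrite z_lim // -addrA; congr (_ + _).
rewrite -sumrN -big_split /=; apply: eq_bigr => j _; ring.
Qed.

Lemma F1 : bj_lp k p y x -> \sum_(j < N) A j * sgp p (al j) = 0.
Proof.
move=> h.
have hb : admissible k 0 by case: k.
rewrite (eq_bigr (fun j : 'I_N => A j * 1 * sgp p (al j))); last by move=> j _; rewrite mulr1.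
apply: (@fermat R p p1 N (L - \sum_(j < N) A j) A al (fun=> 1)).
- by rewrite subr_ge0 L_ge_sum.
- exact: A0.
move=> a.
have := h a 0 hb; rewrite /lp_norm w_lim2 // y_lim.
rewrite powinv_le; last first.
- apply: addr_ge0; first by rewrite mulr_ge0 ?powR_ge0 // subr_ge0 L_ge_sum.
  by apply: sumr_ge0 => j _; rewrite mulr_ge0 // powR_ge0.
- by apply: sumr_ge0 => j _; rewrite mulr_ge0 // powR_ge0.
have e1 : Num.sqrt ((0 + a * 1) ^+ 2 + (0 * 1) ^+ 2) `^ p = pw p a.
  by rewrite /pw add0r mulr1 mul0r expr0n /= addr0 sqrtr_sqr.
have e2 : \sum_(j < N) Num.sqrt ((al j + a * 1) ^+ 2 + (0 * 1) ^+ 2) `^ p * A j =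
    \sum_(j < N) A j * pw p (al j + 1 * a).
  by apply: eq_bigr => j _; rewrite /pw mul1r mulr1 mul0r expr0n /= addr0 sqrtr_sqr mulrC.
have e3 : \sum_(j < N) `|al j| `^ p * A j = \sum_(j < N) A j * pw p (al j).
  by apply: eq_bigr => j _; rewrite /pw mulrC.
by rewrite e1 e2 e3 mulrC.
Qed.

Lemma F2 : bj_lp k p x y -> \sum_(j < N) A j * al j = 0.
Proof.
move=> h.
have hb : admissible k 0 by case: k.
rewrite (eq_bigr (fun j : 'I_N => A j * al j * sgp p 1)); last by move=> j _; rewrite sgp1 mulr1.
apply: (@fermat R p p1 N 0 A (fun=> 1) al).
- by [].
- exact: A0.
move=> a.
have := h a 0 hb; rewrite /lp_norm z_lim2 //.
rewrite powinv_le; last first.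
- apply: addr_ge0; first by rewrite subr_ge0 L_ge_sum.
  by apply: sumr_ge0 => j _; rewrite mulr_ge0 // powR_ge0.
- exact: L_ge0.
have e2 : \sum_(j < N) Num.sqrt ((1 + a * al j) ^+ 2 + (0 * al j) ^+ 2) `^ p * A j =
    \sum_(j < N) A j * pw p (1 + al j * a).
  by apply: eq_bigr => j _; rewrite /pw mul0r expr0n /= addr0 sqrtr_sqr mulrC (mulrC a).
have e3 : \sum_(j < N) A j * pw p 1 = \sum_(j < N) A j.
  by apply: eq_bigr => j _; rewrite /pw normr1 powR1 mulr1.
rewrite e2 e3 mul0r add0r.
set S1 := \sum_(j < N) A j; set S2 := \sum_(j < N) _.
move=> hh; have hh2 : L <= L - S1 + S2 := hh; lra.
Qed.

End LP.


Section Main.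
Variable R : realType.
Variable X : normedModType R.
Variable k : fkind X.
Variable p : R.
Hypothesis p1 : 1 < p.
Hypothesis p2 : p != 2.
Let p0 : 0 < p. Proof. by apply: lt_trans p1. Qed.
Variable x : nat -> X.
Hypothesis hx : lp_mem p x.
Let A j := `|x j| `^ p.

Definition Pprop (f g : R -> R) := forall (N : nat) (al : nat -> R),
  (forall j, (N <= j)%N -> al j = 0) ->
  \sum_(j < N) A j * f (al j) = 0 -> \sum_(j < N) A j * g (al j) = 0.

Lemma PL : left_sym_lp k p x -> Pprop id (sgp p).
Proof.
move=> HL N al alN hs.
apply: (@F1 R X k p p1 x hx N al alN).
apply: HL; first exact: (@y_mem R X p p1 x hx N al alN).
exact: (@O1 R X k p p1 x hx N al alN).
Qed.

Lemma PR : right_sym_lp k p x -> Pprop (sgp p) id.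
Proof.
move=> HR N al alN hs.
apply: (@F2 R X k p p1 x hx N al alN).
apply: HR; first exact: (@y_mem R X p p1 x hx N al alN).
exact: (@O2 R X k p p1 x hx N al alN).
Qed.

Lemma sum_single (N n : nat) (c : R) : (n < N)%N ->
  \sum_(j < N) (if (j : nat) == n then c else 0) = c.
Proof.
move=> hn; rewrite (bigD1 (Ordinal hn)) //= eqxx big1 ?addr0 // => j hj.
by rewrite ifN.
Qed.

Lemma two (f g : R -> R) : f 0 = 0 -> g 0 = 0 -> Pprop f g ->
  forall n m, n != m -> forall u v : R,
  A n * f u + A m * f v = 0 -> A n * g u + A m * g v = 0.
Proof.
move=> f0 g0 P n m nm u v H.
pose al j := if j == n then u else if j == m then v else 0.
pose N := (maxn n m).+1.
have alN : forall j, (N <= j)%N -> al j = 0.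
  move=> j hj; rewrite /al ifN; last by apply/eqP => e; move: hj; rewrite e /N ltnNge leq_maxl.
  rewrite ifN //; by apply/eqP => e; move: hj; rewrite e /N ltnNge leq_maxr.
have hn : (n < N)%N by rewrite /N ltnS leq_maxl.
have hm : (m < N)%N by rewrite /N ltnS leq_maxr.
have E : forall h : R -> R, h 0 = 0 -> \sum_(j < N) A j * h (al j) = A n * h u + A m * h v.
  move=> h h0.
  rewrite (eq_bigr (fun j : 'I_N => (if (j : nat) == n then A n * h u else 0) +
                                     (if (j : nat) == m then A m * h v else 0))).
    by rewrite big_split /= !sum_single.
  move=> j _; rewrite /al.
  have [->|jn] := eqVneq (j : nat) n.
    by rewrite (negbTE nm) addr0.
  have [->|jm] := eqVneq (j : nat) m; first by rewrite add0r.
  by rewrite h0 mulr0 addr0.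
rewrite -E //; apply: P => //; by rewrite E.
Qed.

Lemma three (f g : R -> R) : f 0 = 0 -> g 0 = 0 -> Pprop f g ->
  forall n m l, n != m -> n != l -> m != l -> forall u v w : R,
  A n * f u + A m * f v + A l * f w = 0 -> A n * g u + A m * g v + A l * g w = 0.
Proof.
move=> f0 g0 P n m l nm nl ml u v w H.
pose al j := if j == n then u else if j == m then v else if j == l then w else 0.
pose N := (maxn n (maxn m l)).+1.
have hn : (n < N)%N by rewrite /N ltnS leq_maxl.
have hm : (m < N)%N by rewrite /N ltnS (leq_trans (leq_maxl m l)) // leq_maxr.
have hl : (l < N)%N by rewrite /N ltnS (leq_trans (leq_maxr m l)) // leq_maxr.
have alN : forall j, (N <= j)%N -> al j = 0.
  move=> j hj; rewrite /al.
  rewrite ifN; last by apply/eqP => e; move: hj; rewrite e leqNgt hn.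
  rewrite ifN; last by apply/eqP => e; move: hj; rewrite e leqNgt hm.
  rewrite ifN //; by apply/eqP => e; move: hj; rewrite e leqNgt hl.
have E : forall h : R -> R, h 0 = 0 ->
    \sum_(j < N) A j * h (al j) = A n * h u + A m * h v + A l * h w.
  move=> h h0.
  rewrite (eq_bigr (fun j : 'I_N => (if (j : nat) == n then A n * h u else 0) +
                                     (if (j : nat) == m then A m * h v else 0) +
                                     (if (j : nat) == l then A l * h w else 0))).
    by rewrite !big_split /= !sum_single.
  move=> j _; rewrite /al.
  have [->|jn] := eqVneq (j : nat) n.
    by rewrite (negbTE nm) (negbTE nl) !addr0.
  have [->|jm] := eqVneq (j : nat) m; first by rewrite (negbTE ml) add0r addr0.
  have [->|jl] := eqVneq (j : nat) l; first by rewrite !add0r.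
  by rewrite h0 mulr0 !addr0.
rewrite -E //; apply: P => //; by rewrite E.
Qed.

End Main.


Section Arith.
Variable R : realType.

Lemma mul_pow_eq (a b e : R) : 0 < a -> 0 < b -> e != 1 ->
  a * b `^ e = b * a `^ e -> a = b.
Proof.
move=> a0 b0 e1 h.
have hl : ln (a * b `^ e) = ln (b * a `^ e) by rewrite h.
rewrite !lnM ?posrE ?powR_gt0 // !ln_powR in hl.
have : (1 - e) * (ln a - ln b) = 0 by rewrite -[LHS]subr0 -(subrr (ln a + e * ln b)) {2}hl; ring.
move/eqP; rewrite mulf_eq0 subr_eq0 eq_sym (negbTE e1) /= subr_eq0 => /eqP.
by apply: ln_inj; rewrite posrE.
Qed.

Lemma two_pow_eq (e : R) : 2 `^ e = 2 -> e = 1.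
Proof.
move=> h.
have hl : ln (2 `^ e) = ln 2 by rewrite h.
rewrite ln_powR in hl.
have l2 : 0 < ln (2:R) by apply: ln_gt0; rewrite ltr1n.
have : (e - 1) * ln 2 = 0 by rewrite mulrBl hl mul1r subrr.
move/eqP; rewrite mulf_eq0 (gt_eqF l2) orbF subr_eq0 => /eqP //.
Qed.

Lemma rcore (p a b : R) : 1 < p -> 0 < a -> 0 < b ->
  a * sgp p (b `^ (p - 1)^-1) + b * sgp p (- (a `^ (p - 1)^-1)) = 0.
Proof.
move=> p1 a0 b0.
have pq : (p - 1)^-1 * (p - 1) = 1 by rewrite mulVf // subr_eq0 gt_eqF.
have hneg : - (a `^ (p - 1)^-1) < 0 by rewrite oppr_lt0 powR_gt0.
rewrite (sgp_pos p (powR_gt0 _ b0)) (sgp_neg p hneg) opprK.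
rewrite -!powRrM pq !powRr1 ?ltW //.
by rewrite mulrN mulrC subrr.
Qed.

Lemma rcore3 (p c : R) : 1 < p -> 
  c * sgp p 1 + c * sgp p 1 + c * sgp p (- (2 `^ (p - 1)^-1)) = 0.
Proof.
move=> p1.
have pq : (p - 1)^-1 * (p - 1) = 1 by rewrite mulVf // subr_eq0 gt_eqF.
have hneg : - ((2:R) `^ (p - 1)^-1) < 0 by rewrite oppr_lt0 powR_gt0.
rewrite sgp1 (sgp_neg p hneg) opprK -powRrM pq powRr1 //.
ring.
Qed.

End Arith.

Section Fin.
Variable R : realType.
Variable X : normedModType R.
Variable k : fkind X.
Variable p : R.
Hypothesis p1 : 1 < p.
Hypothesis p2 : p != 2.
Let p0 : 0 < p. Proof. by apply: lt_trans p1. Qed.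
Variable x : nat -> X.
Hypothesis hx : lp_mem p x.
Let A j := `|x j| `^ p.

Lemma A_pos j : x j != 0 -> 0 < A j.
Proof. by move=> h; rewrite /A powR_gt0 // normr_gt0. Qed.

Lemma A_eq_norm n m : A n = A m -> `|x n| = `|x m|.
Proof. by move=> h; apply: (powR_injective p0) => //; rewrite nnegrE. Qed.

Let pm1 : p - 1 != 1.
Proof. by apply: contra p2 => /eqP e; apply/eqP; lra. Qed.

Let q := (p - 1)^-1.

Let q1 : q != 1.
Proof. by rewrite /q invr_eq1. Qed.

Let powq (c : R) : 0 <= c -> (c `^ q) `^ (p - 1) = c.
Proof. by move=> c0; rewrite -powRrM mulVf ?powRr1 // subr_eq0 gt_eqF. Qed.

Lemma eqL : left_sym_lp k p x -> forall n m, n != m -> x n != 0 -> x m != 0 -> A n = A m.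
Proof.
move=> HL n m nm hn hm.
have an := A_pos hn; have am := A_pos hm.
have h := @two R X p x id (sgp p) erefl (sgp0 p) (PL p1 hx HL) n m nm (A m) (- A n).
have h' : A n * sgp p (A m) + A m * sgp p (- A n) = 0 by apply: h; rewrite /A /=; ring.
rewrite (sgp_pos p am) (sgp_neg p) ?oppr_lt0 // opprK in h'.
apply: (mul_pow_eq an am pm1).
by apply/eqP; rewrite -subr_eq0; apply/eqP; rewrite -h'; ring.
Qed.

Lemma eqR : right_sym_lp k p x -> forall n m, n != m -> x n != 0 -> x m != 0 -> A n = A m.
Proof.
move=> HR n m nm hn hm.
have an := A_pos hn; have am := A_pos hm.
have h := @two R X p x (sgp p) id (sgp0 p) erefl (PR p1 hx HR) n m nm (A m `^ q) (- (A n `^ q)).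
have h' : A n * A m `^ q + A m * - (A n `^ q) = 0.
  by apply: h; exact: rcore p1 an am.
apply: (mul_pow_eq an am q1).
by move: h'; rewrite mulrN => /eqP; rewrite subr_eq0 => /eqP.
Qed.

Lemma contraL : left_sym_lp k p x -> forall n m l, n != m -> n != l -> m != l ->
  x n != 0 -> x m != 0 -> x l != 0 -> False.
Proof.
move=> HL n m l nm nl ml hn hm hl.
have an := A_pos hn.
have emn := eqL HL nm hn hm; have enl := eqL HL nl hn hl.
have h := @three R X p x id (sgp p) erefl (sgp0 p) (PL p1 hx HL) n m l nm nl ml 1 1 (-2).
have h' : A n * sgp p 1 + A m * sgp p 1 + A l * sgp p (-2) = 0.
  apply: h; have e : A n * 1 + A n * 1 + A n * (-2) = 0 by ring.
  rewrite {2}emn {2}enl in e; exact: e.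
rewrite sgp1 (sgp_neg p) ?oppr_lt0 // opprK -emn -enl in h'.
have : A n * (2 - 2 `^ (p - 1)) = 0 by rewrite -h'; ring.
move/eqP; rewrite mulf_eq0 (gt_eqF an) /= subr_eq0 => /eqP e.
have := two_pow_eq (esym e) => e2.
by move/eqP: pm1; apply.
Qed.

Lemma contraR : right_sym_lp k p x -> forall n m l, n != m -> n != l -> m != l ->
  x n != 0 -> x m != 0 -> x l != 0 -> False.
Proof.
move=> HR n m l nm nl ml hn hm hl.
have an := A_pos hn.
have emn := eqR HR nm hn hm; have enl := eqR HR nl hn hl.
have h := @three R X p x (sgp p) id (sgp0 p) erefl (PR p1 hx HR) n m l nm nl ml 1 1 (- (2 `^ q)).
have h' : A n * 1 + A m * 1 + A l * - (2 `^ q) = 0.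
  apply: h; have e := rcore3 (A n) p1.
  rewrite {2}emn {2}enl in e; exact: e.
rewrite -emn -enl in h'.
have : A n * (2 - 2 `^ q) = 0 by rewrite -h'; ring.
move/eqP; rewrite mulf_eq0 (gt_eqF an) /= subr_eq0 => /eqP e.
have := two_pow_eq (esym e) => e2.
by move/eqP: q1; apply.
Qed.

End Fin.


Section Single.
Variable R : realType.
Variable X : normedModType R.
Variable k : fkind X.
Variable p : R.
Hypothesis p1 : 1 < p.
Let p0 : 0 < p. Proof. by apply: lt_trans p1. Qed.
Variable x : nat -> X.
Hypothesis hx : lp_mem p x.

Lemma sc0 a b : sc k a b 0 = 0.
Proof. case: k => [|cs] /=; first by rewrite scaler0. have -> : cJ cs 0 = 0 by rewrite linear0. by rewrite !scaler0 addr0. Qed.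

Lemma single_lim (z : nat -> X) n : (forall j, j != n -> z j = 0) ->
  lp_mem p z /\ lp_norm p z = `|z n|.
Proof.
move=> hz.
have e : (fun j => `|z j| `^ p) =
    (fun j => 0 * `|x j| `^ p + (if j == n then `|z n| `^ p else 0)).
  apply: funext => j; rewrite mul0r add0r.
  have [->|jn] := eqVneq j n; first by [].
  by rewrite hz // normr0 powR0 // gt_eqF.
have wN : forall j, (n.+1 <= j)%N -> (if j == n then `|z n| `^ p else 0) = 0.
  by move=> j hj; rewrite ifN //; apply/eqP => e'; move: hj; rewrite e' ltnn.
split.
  rewrite /lp_mem e; exact: (@series_mod_cvg R _ _ 0 n.+1 hx wN).
rewrite /lp_norm e (@series_mod_lim R _ _ 0 n.+1 hx wN) mul0r add0r sum_single //.
by rewrite -powRrM mulfV ?gt_eqF // powRr1.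
Qed.

Lemma symL : left_sym_lp k p x -> forall n, (forall j, j != n -> x j = 0) -> left_sym k (x n).
Proof.
move=> HL n hn y0 hb a b adm.
pose Y j := if j == n then y0 else 0.
have hY : forall j, j != n -> Y j = 0 by move=> j jn; rewrite /Y ifN.
have [memY nY] := single_lim hY.
have bjxY : bj_lp k p x Y.
  move=> a' b' adm'.
  have [_ n1] := single_lim hn.
  have h2 : forall j, j != n -> x j + sc k a' b' (Y j) = 0.
    by move=> j jn; rewrite hn // hY // sc0 addr0.
  have [_ n2] := single_lim h2.
  by rewrite n1 n2 /Y eqxx; exact: hb.
have := HL Y memY bjxY a b adm.
have h3 : forall j, j != n -> Y j + sc k a b (x j) = 0.
  by move=> j jn; rewrite hn // hY // sc0 addr0.
have [_ n3] := single_lim h3.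
by rewrite nY n3 /Y eqxx.
Qed.

Lemma symR : right_sym_lp k p x -> forall n, (forall j, j != n -> x j = 0) -> right_sym k (x n).
Proof.
move=> HR n hn y0 hb a b adm.
pose Y j := if j == n then y0 else 0.
have hY : forall j, j != n -> Y j = 0 by move=> j jn; rewrite /Y ifN.
have [memY nY] := single_lim hY.
have bjYx : bj_lp k p Y x.
  move=> a' b' adm'.
  have h2 : forall j, j != n -> Y j + sc k a' b' (x j) = 0.
    by move=> j jn; rewrite hn // hY // sc0 addr0.
  have [_ n2] := single_lim h2.
  by rewrite nY n2 /Y eqxx; exact: hb.
have := HR Y memY bjYx a b adm.
have [_ n1] := single_lim hn.
have h3 : forall j, j != n -> x j + sc k a b (Y j) = 0.
  by move=> j jn; rewrite hn // hY // sc0 addr0.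
have [_ n3] := single_lim h3.
by rewrite n1 n3 /Y eqxx.
Qed.

End Single.


Lemma final_dir (R : realType) (X : normedModType R) (x : nat -> X)
  (P : X -> Prop) :
  (forall n m, n != m -> x n != 0 -> x m != 0 -> `|x n| = `|x m|) ->
  (forall n m l, n != m -> n != l -> m != l -> x n != 0 -> x m != 0 -> x l != 0 -> False) ->
  (forall n, (forall j, j != n -> x j = 0) -> P (x n)) ->
  (exists n : nat, (forall j, j != n -> x j = 0) /\ P (x n)) \/
  (exists n m : nat, n != m /\ (forall j, j != n -> j != m -> x j = 0) /\
                     `|x n| = `|x m|).
Proof.
move=> Heq H3 Hs.
have [[n [m [nm [hn hm]]]] | H2] := pselect (exists n m : nat, n != m /\ x n != 0 /\ x m != 0).
  right; exists n, m; split => //; split; last exact: Heq.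
  move=> j jn jm; apply: contrapT => /eqP hj.
  by apply: (H3 n m j nm _ _ hn hm hj); rewrite eq_sym.
left.
have [n hn] : exists n : nat, forall j, j != n -> x j = 0.
  case: (pselect (exists n : nat, x n != 0)) => [[n hn]|H1].
    exists n => j jn; apply: contrapT => /eqP hj; apply: H2.
    by exists j, n.
  exists 0%N => j _; apply: contrapT => /eqP hj; apply: H1; by exists j.
by exists n; split => //; exact: Hs.
Qed.


End Helpers.
Import Helpers.

Theorem corollary3p17 (R : realType) (X : completeNormedModType R) (k : fkind X)
    (p : R) :
  norm_frechet X -> 1 < p -> p != 2 ->
  forall x : nat -> X, lp_mem p x ->
  (left_sym_lp k p x ->
     (exists n : nat, (forall j, j != n -> x j = 0) /\ left_sym k (x n)) \/
     (exists n m : nat, n != m /\ (forall j, j != n -> j != m -> x j = 0) /\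
                        `|x n| = `|x m|)) /\
  (right_sym_lp k p x ->
     (exists n : nat, (forall j, j != n -> x j = 0) /\ right_sym k (x n)) \/
     (exists n m : nat, n != m /\ (forall j, j != n -> j != m -> x j = 0) /\
                        `|x n| = `|x m|)).
Proof.
move=> _ p1 p2 x hx; split => [HL|HR].
  apply: final_dir => //.
  - move=> n m nm hn hm; apply: (A_eq_norm p1); exact: (eqL p1 p2 hx HL nm hn hm).
  - move=> n m l nm nl ml hn hm hl; exact: (contraL p1 p2 hx HL nm nl ml hn hm hl).
  - move=> n hn; exact: (symL p1 hx HL hn).
apply: final_dir => //.
- move=> n m nm hn hm; apply: (A_eq_norm p1); exact: (eqR p1 p2 hx HR nm hn hm).
- move=> n m l nm nl ml hn hm hl; exact: (contraR p1 p2 hx HR nm nl ml hn hm hl).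
- move=> n hn; exact: (symR p1 hx HR hn).
Qed.
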